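(* Let $A$ be a reduced commutative ring with finitely many minimal prime ideals, and let $A\subseteq B$ be an extension of rings which preserves non-zero-divisors, i.e. every non-zero-divisor of $A$ is a non-zero-divisor of $B$. Then there is an exact sequence of abelian groups $$0\longrightarrow \mathfrak{C}(A,B)\longrightarrow \mathfrak{C}(A)\longrightarrow \mathfrak{C}(B),$$ in which the map $\mathfrak{C}(A)\to\mathfrak{C}(B)$ is the one induced by the ring map $T(A)\to T(B)$, $a/s\mapsto a/s$ (via $L\mapsto$ the $B$-submodule of $T(B)$ generated by the image of $L$).
   Context: All rings are commutative with identity. For an extension of rings $R\subseteq S$ and $R$-submodules $L,L'$ of $S$, $LL'$ is the $R$-submodule of finite sums $\sum x_ky_k$, $x_k\in L$, $y_k\in L'$. An $R$-submodule $L$ of $S$ is an invertible ideal of $R\subseteq S$ if $LL'=R$ for some $R$-submodule $L'$ of $S$; these form an abelian group $\mathscr{G}(R,S)$ under multiplication and $\mathfrak{C}(R,S)=\mathscr{G}(R,S)/\{Rx: x\in S^\ast\}$. $T(R)$ denotes the total ring of fractions of $R$ (localization at the set of non-zero-divisors), and $\mathfrak{C}(R)=\mathfrak{C}(R,T(R))$. *)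

(* Defs.v *)
(* Rings: comPzRingType (commutative with 1; zero ring allowed). *)
From HB Require Import structures.
From mathcomp Require Import all_boot all_order all_algebra.
Set Implicit Arguments. Unset Strict Implicit. Unset Printing Implicit Defensive.
Import Order.TTheory GRing.Theory.
Local Open Scope ring_scope.

Definition seteq (T : Type) (X Y : T -> Prop) := forall x, X x <-> Y x.

Section RingNotions.
Variable R : comPzRingType.

Definition nzd (x : R) := forall y : R, x * y = 0 -> y = 0.
Definition is_unit (x : R) := exists y : R, x * y = 1.
Definition reduced := forall (x : R) (n : nat), x ^+ n = 0 -> x = 0.

Definition ideal (P : R -> Prop) :=
  [/\ P 0, (forall x y, P x -> P y -> P (x + y)) & (forall r x, P x -> P (r * x))].
Definition prime_ideal (P : R -> Prop) :=
  [/\ ideal P, ~ P 1 & (forall x y, P (x * y) -> P x \/ P y)].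
Definition minimal_prime (P : R -> Prop) :=
  prime_ideal P /\
  (forall Q, prime_ideal Q -> (forall x, Q x -> P x) -> forall x, P x -> Q x).
Definition fin_min_primes :=
  exists (n : nat) (f : nat -> R -> Prop),
    forall P, minimal_prime P -> exists2 k, (k < n)%N & seteq P (f k).
End RingNotions.

Section Extensions.
(* An extension R ⊆ S is given by an injective ring morphism j : R -> S;
   R acts on S through j. *)
Variables (R S : comPzRingType) (j : R -> S).

Definition submod (L : S -> Prop) :=
  [/\ L 0, (forall x y, L x -> L y -> L (x + y)) & (forall r x, L x -> L (j r * x))].

Definition prodm (X Y : S -> Prop) : S -> Prop :=
  fun z => exists (n : nat) (x y : 'I_n -> S),
    [/\ forall k, X (x k), forall k, Y (y k) & z = \sum_(k < n) x k * y k].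

Definition ringimg : S -> Prop := fun z => exists r, z = j r.

Definition principal (x : S) : S -> Prop := fun z => exists r, z = j r * x.

(* invertible ideals of R ⊆ S (elements of the group G(R,S)) *)
Definition invertible (L : S -> Prop) :=
  submod L /\ exists L', submod L' /\ seteq (prodm L L') ringimg.

(* equality of classes in C(R,S) = G(R,S) / {R x : x in S^*} *)
Definition classeq (L M : S -> Prop) :=
  exists x, is_unit x /\ seteq L (prodm (principal x) M).
End Extensions.

(* T is (a model of) the total ring of fractions of R via j : R -> T,
   i.e. the localization of R at its non-zero-divisors. *)
Definition is_total_fractions (R T : comPzRingType) (j : R -> T) :=
  [/\ injective j, (forall s, nzd s -> is_unit (j s))
    & (forall t, exists a s, nzd s /\ t * j s = j a)].

Definition modiso (R S1 S2 : comPzRingType) (j1 : R -> S1) (j2 : R -> S2)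
    (L1 : S1 -> Prop) (L2 : S2 -> Prop) :=
  exists h : S1 -> S2,
    [/\ forall x y, L1 x -> L1 y -> h (x + y) = h x + h y,
        forall r x, L1 x -> h (j1 r * x) = j2 r * h x,
        forall x, L1 x -> L2 (h x),
        forall x y, L1 x -> L1 y -> h x = h y -> x = y
      & forall y, L2 y -> exists2 x, L1 x & h x = y].

(* The map C(A) -> C(B) induced by phi : T(A) -> T(B):
   L |-> the B-submodule of T(B) generated by phi(L). *)
Definition extmod (B TA TB : comPzRingType) (jB : B -> TB) (phi : TA -> TB)
    (L : TA -> Prop) : TB -> Prop :=
  prodm (ringimg jB) (fun z => exists2 l, L l & z = phi l).

(* Main.v *)
Require Import Defs.
From mathcomp Require Import all_boot all_order all_algebra.
From Stdlib Require Import Classical ClassicalEpsilon FunctionalExtensionality PropExtensionality.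
From mathcomp Require Import ring.
From mathcomp Require classical_sets.
Set Implicit Arguments. Unset Strict Implicit. Unset Printing Implicit Defensive.
Import GRing.Theory.
Local Open Scope ring_scope.

Module ZZ.
Import classical_sets.
Lemma myzorn (T : Type) (P : (T -> Prop) -> Prop) :
  (forall F : (T -> Prop) -> Prop, (forall X, F X -> P X) ->
     (forall X Y, F X -> F Y -> (forall z, X z -> Y z) \/ (forall z, Y z -> X z)) ->
     P (fun z => exists2 X, F X & X z)) ->
  exists A, P A /\ forall B, (forall z, A z -> B z) -> ~ (forall z, B z -> A z) -> ~ P B.
Proof.
move=> H.
have : exists A, P A /\ forall B, proper A B -> ~ P B.
  by apply: Zorn_bigcup => F FP tot; apply: H.
move=> [A [PA HA]].
exists A; split=> // B AB BA; apply: HA; split=> //.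
Qed.
End ZZ.

Section CA.
Variable A : comPzRingType.

Lemma ideal_opp (P : A -> Prop) x : ideal P -> P x -> P (- x).
Proof. by case=> _ _ hm Px; rewrite -mulN1r; apply: hm. Qed.

Lemma ideal_add (P : A -> Prop) x y : ideal P -> P x -> P y -> P (x + y).
Proof. by case=> _ ha _; apply: ha. Qed.

Lemma ideal_mul (P : A -> Prop) r x : ideal P -> P x -> P (r * x).
Proof. by case=> _ _ hm; apply: hm. Qed.

Lemma prime_nmul (P : A -> Prop) x y : prime_ideal P -> ~ P x -> ~ P y -> ~ P (x * y).
Proof. by case=> _ _ hp nx ny /hp [] . Qed.

Lemma avoid_add (P : A -> Prop) a c t : ideal P -> P c -> ~ P a -> ~ P (a + c * t).
Proof.
move=> iP Pc na Pat; apply: na.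
have -> : a = (a + c * t) + - (t * c) by rewrite mulrC addrK.
by apply: ideal_add => //; apply: ideal_opp => //; apply: ideal_mul.
Qed.

Lemma add_avoid (P : A -> Prop) a u : ideal P -> P a -> ~ P u -> ~ P (a + u).
Proof.
move=> iP Pa nu Pau; apply: nu.
have -> : u = (a + u) + - a by rewrite addrC addKr.
by apply: ideal_add => //; apply: ideal_opp.
Qed.

Lemma exists_prime_avoiding (b : A) :
  (forall n, b ^+ n <> 0) -> exists Q, prime_ideal Q /\ ~ Q b.
Proof.
move=> nb.
pose PP (J : A -> Prop) := [/\ (forall x y, J x -> J y -> J (x + y)),
   (forall r x, J x -> J (r * x)) & (forall n, ~ J (b ^+ n))].
have [M [[Madd Mmul Mav] Mmax]] : exists M, PP M /\ forall B, (forall z, M z -> B z) ->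
   ~ (forall z, B z -> M z) -> ~ PP B.
  apply: ZZ.myzorn => F FP tot; split.
  - move=> x y [X FX Xx] [Y FY Yy].
    case: (tot X Y FX FY) => sub.
      by exists Y => //; have [h _ _] := FP Y FY; apply: h => //; apply: sub.
    by exists X => //; have [h _ _] := FP X FX; apply: h => //; apply: sub.
  - by move=> r x [X FX Xx]; exists X => //; have [_ h _] := FP X FX; apply: h.
  - by move=> n [X FX Xx]; have [_ _ h] := FP X FX; apply: (h n).
have M0 : M 0.
  apply: NNPP => nM0; apply: (Mmax (fun z => M z \/ z = 0)).
  - by move=> z; left.
  - by move=> h; apply: nM0; apply: h; right.
  split.
  - move=> x y [Mx|->] [My|->]; rewrite ?addr0 ?add0r; by [left; apply: Madd|left|left|right].
  - by move=> r x [Mx|->]; [left; apply: Mmul|right; rewrite mulr0].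
  - by move=> n [h|h]; [apply: (Mav n)|apply: (nb n)].
have iM : ideal M by split.
exists M; split; last by rewrite -[b]expr1; apply: Mav.
split=> //; first by rewrite -(expr0 b); apply: Mav.
move=> x y Mxy; apply: NNPP => /not_or_and [nx ny].
have ext (w : A) : ~ M w -> exists n, exists m r, M m /\ b ^+ n = m + r * w.
  move=> nw; apply: NNPP => hne.
  apply: (Mmax (fun z => exists m r, M m /\ z = m + r * w)).
  - by move=> z Mz; exists z, 0; rewrite mul0r addr0.
  - by move=> h; apply: nw; apply: h; exists 0, 1; rewrite mul1r add0r.
  split.
  - move=> _ _ [m1 [r1 [M1 ->]]] [m2 [r2 [M2 ->]]]; exists (m1 + m2), (r1 + r2).
    by split; [apply: Madd|rewrite mulrDl addrACA].
  - move=> s _ [m [r [Mm ->]]]; exists (s * m), (s * r).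
    by split; [apply: Mmul|rewrite mulrDr mulrA].
  - by move=> n [m [r [Mm e]]]; apply: hne; exists n, m, r.
have [n [m1 [r1 [M1 e1]]]] := ext _ nx.
have [k [m2 [r2 [M2 e2]]]] := ext _ ny.
apply: (Mav (n + k)%N); rewrite exprD e1 e2.
have -> : (m1 + r1 * x) * (m2 + r2 * y) =
   m1 * (m2 + r2 * y) + (m2 * (r1 * x) + (r1 * r2) * (x * y)).
  by ring.
apply: (Madd); first by rewrite mulrC; apply: (Mmul).
by apply: (Madd); [rewrite mulrC|]; apply: (Mmul).
Qed.

Lemma exists_min_prime_below (Q : A -> Prop) : prime_ideal Q ->
  exists P, minimal_prime P /\ (forall z, P z -> Q z).
Proof.
move=> pQ.
pose PP (X : A -> Prop) := (forall z, ~ X z) \/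
  exists Pr, [/\ prime_ideal Pr, (forall z, Pr z -> Q z) & forall z, X z <-> ~ Pr z].
have [M [PM Mmax]] : exists M, PP M /\ forall B, (forall z, M z -> B z) ->
   ~ (forall z, B z -> M z) -> ~ PP B.
  apply: ZZ.myzorn => F FP tot.
  case: (classic (exists z X, F X /\ X z)); last first.
    by move=> h; left => z [X FX Xz]; apply: h; exists z, X.
  move=> [z0 [X0 [FX0 X0z0]]].
  have [X0e|[P0 [pP0 P0Q P0e]]] := FP X0 FX0; first by case: (X0e z0).
  have Fchar X : F X -> forall z, X z -> exists Pr, prime_ideal Pr /\ forall w, X w <-> ~ Pr w.
    move=> FX z Xz; have [Xe|[Pr [pPr _ Pre]]] := FP X FX; first by case: (Xe z).
    by exists Pr.
  right; exists (fun z => ~ exists2 X, F X & X z); split; last first.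
  - move=> z; split; first by move=> h; apply.
    by move=> /NNPP.
  - move=> z nz; apply: P0Q; apply: NNPP => nP0; apply: nz; exists X0 => //.
    by apply/P0e.
  have notin (X : A -> Prop) : F X -> (forall Pr, prime_ideal Pr ->
      (forall w, X w <-> ~ Pr w) -> False) -> (exists z, X z) -> False.
    by move=> FX h [z Xz]; have [Pr [pPr e]] := Fchar X FX z Xz; apply: (h Pr).
  split; first split.
  - move=> [X FX HX0]; apply: (notin X FX); last by exists 0.
    by move=> Pr [[Pr0 _ _] _ _] e; exact: (e 0).1 HX0 Pr0.
  - move=> x y nx ny [X FX Xxy]; apply: (notin X FX); last by exists (x+y).
    move=> Pr [iPr _ _] e; apply: ((e (x + y)).1 Xxy); apply: ideal_add => //.
      by apply: NNPP => h; apply: nx; exists X => //; apply/e.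
    by apply: NNPP => h; apply: ny; exists X => //; apply/e.
  - move=> r x nx [X FX Xrx]; apply: (notin X FX); last by exists (r*x).
    move=> Pr [iPr _ _] e; apply: ((e (r * x)).1 Xrx); apply: ideal_mul => //.
    by apply: NNPP => h; apply: nx; exists X => //; apply/e.
  - move=> h; apply: h; exists X0 => //; apply/P0e.
    by have [_ ? _] := pP0.
  - move=> x y nxy; apply: NNPP => /not_or_and [/NNPP [X FX Xx] /NNPP [Y FY Yy]].
    apply: nxy.
    have key (Z : A -> Prop) : F Z -> Z x -> Z y -> exists2 X, F X & X (x * y).
      move=> FZ Zx Zy; exists Z => //.
      have [Pr [pPr e]] := Fchar Z FZ x Zx.
      apply/e; apply: prime_nmul => //; [apply/e|apply/e] => //.
    case: (tot X Y FX FY) => sub; first by apply: (key Y) => //; apply: sub.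
    by apply: (key X) => //; apply: sub.
case: PM => [Me|[Pr [pPr PrQ Pre]]].
  exfalso; apply: (Mmax (fun z => ~ Q z)).
  - by move=> z /Me.
  - by move=> h; have [_ nQ1 _] := pQ; case: (Me 1 (h 1 nQ1)).
  by right; exists Q; split.
exists Pr; split=> //; split=> // Q' pQ' Q'Pr x Prx.
apply: NNPP => nQ'x.
apply: (Mmax (fun z => ~ Q' z)).
- by move=> z /Pre nPrz Q'z; apply: nPrz; apply: Q'Pr.
- by move=> h; move: (h x nQ'x) => /Pre.
right; exists Q'; split=> //; by move=> z Q'z; apply: PrQ; apply: Q'Pr.
Qed.

Lemma nzd_avoid (a : A) : reduced A -> (forall P, minimal_prime P -> ~ P a) -> nzd a.
Proof.
move=> red hav b ab0; apply: NNPP => nb0.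
have nb : forall n, b ^+ n <> 0 by move=> n /red.
have [Q [pQ nQb]] := exists_prime_avoiding nb.
have [P [mP PQ]] := exists_min_prime_below pQ.
have [[[P0 _ _] _ pr] _] := mP.
have := pr a b; rewrite ab0 => /(_ P0) [/(hav P mP)//|/PQ//].
Qed.
End CA.

Section Avoid.
Variables (A B : comPzRingType) (i : {rmorphism A -> B}).

Lemma c_exists (f : nat -> A -> Prop) n a : minimal_prime (f n) ->
  (forall k, (k < n)%N -> minimal_prime (f k) -> ~ f k a) -> f n a ->
  forall m, (m <= n)%N -> exists c, ~ f n c /\ forall k, (k < m)%N -> minimal_prime (f k) -> f k c.
Proof.
move=> mn hk fna; elim=> [_|m IH lemn].
  by exists 1; split=> //; have [[_ ? _] _] := mn.
have [c [nc hc]] := IH (ltnW lemn).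
case: (classic (minimal_prime (f m))) => mm; last first.
  exists c; split=> // k; rewrite ltnS leq_eqVlt => /orP [/eqP -> //|]; exact: hc.
have [e [fme nfe]] : exists e, f m e /\ ~ f n e.
  apply: NNPP => h.
  have sub : forall z, f m z -> f n z.
    by move=> z fmz; apply: NNPP => nz; apply: h; exists z.
  have [_ mnm] := mn; have [pm _] := mm.
  exact: (hk m lemn mm (mnm (f m) pm sub a fna)).
exists (c * e); split.
  by apply: prime_nmul => //; have [] := mn.
move=> k; rewrite ltnS leq_eqVlt => /orP [/eqP -> _|kl mk].
  by apply: ideal_mul => //; have [[]] := mm.
by rewrite mulrC; apply: ideal_mul => //; [have [[]] := mk | apply: hc].
Qed.

Lemma avoid_ind (L L' : B -> Prop) : submod i L -> submod i L' ->
  (forall x y, L x -> L' y -> exists a, x * y = i a) ->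
  (forall P, minimal_prime P -> exists x y a, [/\ L x, L' y, x * y = i a & ~ P a]) ->
  forall (f : nat -> A -> Prop) n,
  exists x y a, [/\ L x, L' y, x * y = i a &
     forall k, (k < n)%N -> minimal_prime (f k) -> ~ f k a].
Proof.
move=> [L0 Ladd Lmul] [L'0 L'add L'mul] prodA cover f; elim=> [|n IH].
  by exists 0, 0, 0; split=> //; rewrite mul0r rmorph0.
have [x [y [a [Lx Ly exy hk]]]] := IH.
have keep : ~ (minimal_prime (f n) /\ f n a) ->
   exists x y a, [/\ L x, L' y, x * y = i a &
     forall k, (k < n.+1)%N -> minimal_prime (f k) -> ~ f k a].
  move=> h; exists x, y, a; split=> // k; rewrite ltnS leq_eqVlt => /orP [/eqP -> mn fna|].
    by apply: h.
  exact: hk.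
case: (classic (minimal_prime (f n) /\ f n a)); last exact: keep.
move=> [mn fna].
have [c [nc hc]] := c_exists mn hk fna (leqnn n).
have finish X Y t : L X -> L' Y -> X * Y = i (a + c * t) -> ~ f n (a + c * t) ->
   exists x y a, [/\ L x, L' y, x * y = i a &
     forall k, (k < n.+1)%N -> minimal_prime (f k) -> ~ f k a].
  move=> LX LY eXY nn; exists X, Y, (a + c * t); split=> // k.
  rewrite ltnS leq_eqVlt => /orP [/eqP -> //|kl mk].
  by apply: avoid_add; [have [[]] := mk|apply: hc|apply: hk].
have [[[fn0 fnadd fnmul] _ fnpr] _] := mn.
have pfn : prime_ideal (f n) by have [] := mn.
have ifn : ideal (f n) by have [[]] := mn.
have [z [z' [w [Lz Lz' ezz nw]]]] := cover _ mn.
have [u eu] := prodA _ _ Lx Lz'.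
have [v ev] := prodA _ _ Lz Ly.
have LcZ : L (i c * z) by apply: Lmul.
have LcZ' : L' (i c * z') by apply: L'mul.
case: (classic (f n u)) => fu; last first.
  apply: (finish x (y + i c * z') u) => //; first by apply: L'add.
    by rewrite mulrDr exy mulrCA eu -!rmorphM -rmorphD.
  by apply: add_avoid => //; apply: prime_nmul.
case: (classic (f n v)) => fv; last first.
  apply: (finish (x + i c * z) y v) => //; first by apply: Ladd.
    by rewrite mulrDl exy -mulrA ev -!rmorphM -rmorphD.
  by apply: add_avoid => //; apply: prime_nmul.
apply: (finish (x + i c * z) (y + i c * z') (u + v + c * w)); [by apply: Ladd|by apply: L'add| |].
  have -> : (x + i c * z) * (y + i c * z') =
     x * y + i c * (x * z') + i c * (z * y) + i c * i c * (z * z') by ring.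
  by rewrite exy eu ev ezz -!rmorphM -!rmorphD; congr (i _); ring.
have -> : a + c * (u + v + c * w) = (a + c * u + c * v) + c * (c * w) by ring.
apply: add_avoid => //.
  by apply: ideal_add => //; [apply: ideal_add => //|]; apply: ideal_mul.
by apply: prime_nmul => //; apply: prime_nmul.
Qed.
End Avoid.

Lemma choicef (I T : Type) (P : I -> T -> Prop) :
  (forall i, exists t, P i t) -> exists f : I -> T, forall i, P i (f i).
Proof.
move=> H; exists (fun i => proj1_sig (constructive_indefinite_description _ (H i))).
by move=> i; case: (constructive_indefinite_description _ (H i)).
Qed.

Section Gen.
Variable S : comPzRingType.
Implicit Types X Y Z : S -> Prop.

Definition addc Z := Z 0 /\ forall x y, Z x -> Z y -> Z (x + y).

Lemma addc_sum Z n (F : 'I_n -> S) : addc Z -> (forall k, Z (F k)) -> Z (\sum_(k < n) F k).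
Proof. by move=> [Z0 Zadd] HF; apply: big_ind. Qed.

Lemma prodm_ind X Y Z : addc Z -> (forall x y, X x -> Y y -> Z (x * y)) ->
  forall z, prodm X Y z -> Z z.
Proof.
move=> aZ H z [n [x [y [Hx Hy ->]]]]; apply: addc_sum => // k; exact: H.
Qed.

Lemma prodm_mul X Y x y : X x -> Y y -> prodm X Y (x * y).
Proof.
move=> Xx Yy; exists 1%N, (fun _ => x), (fun _ => y); split=> //.
by rewrite big_ord1.
Qed.

Lemma prodm0 X Y : prodm X Y 0.
Proof. by exists 0%N, (fun _ => 0), (fun _ => 0); split=> [[]|[]|]; rewrite ?big_ord0. Qed.

Lemma prodm_add X Y u v : prodm X Y u -> prodm X Y v -> prodm X Y (u + v).
Proof.
move=> [n [x [y [Hx Hy ->]]]] [m [x' [y' [Hx' Hy' ->]]]].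
pose sel (T : Type) (a : 'I_n -> T) (b : 'I_m -> T) (k : 'I_(n + m)) :=
  match split k with inl p => a p | inr q => b q end.
exists (n + m)%N, (sel _ x x'), (sel _ y y'); split.
- by move=> k; rewrite /sel; case: (split k).
- by move=> k; rewrite /sel; case: (split k).
rewrite big_split_ord /=; congr (_ + _); apply: eq_bigr => k _; rewrite /sel.
  by rewrite (unsplitK (inl k)).
by rewrite (unsplitK (inr k)).
Qed.

Lemma addc_prodm X Y : addc (prodm X Y).
Proof. by split; [apply: prodm0|apply: prodm_add]. Qed.

Lemma prodm_sum X Y n (F : 'I_n -> S) : (forall k, prodm X Y (F k)) -> prodm X Y (\sum_(k < n) F k).
Proof. by apply: addc_sum; apply: addc_prodm. Qed.

Lemma prodm_mono X Y X' Y' : (forall x, X x -> X' x) -> (forall y, Y y -> Y' y) ->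
  forall z, prodm X Y z -> prodm X' Y' z.
Proof.
move=> h1 h2; apply: prodm_ind; first exact: addc_prodm.
by move=> x y Xx Yy; apply: prodm_mul; [apply: h1|apply: h2].
Qed.

Lemma prodm_comm X Y z : prodm X Y z -> prodm Y X z.
Proof.
apply: prodm_ind; first exact: addc_prodm.
by move=> x y Xx Yy; rewrite mulrC; apply: prodm_mul.
Qed.

Lemma prodm_ind_mul X Y Z w : addc Z -> (forall x y, X x -> Y y -> Z (x * y * w)) ->
  forall u, prodm X Y u -> Z (u * w).
Proof.
move=> [Z0 Zadd] H; apply: (prodm_ind (Z := fun u => Z (u * w))) => //.
by split; [rewrite mul0r|move=> a b Ha Hb; rewrite mulrDl; apply: Zadd].
Qed.

Lemma prodm_ind2 X Y X' Y' Z : addc Z ->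
  (forall x y x' y', X x -> Y y -> X' x' -> Y' y' -> Z ((x * y) * (x' * y'))) ->
  forall u v, prodm X Y u -> prodm X' Y' v -> Z (u * v).
Proof.
move=> aZ H u v pu pv; apply: (prodm_ind_mul (X := X) (Y := Y)) => // x y Xx Yy.
rewrite mulrC; apply: (prodm_ind_mul (X := X') (Y := Y')) => // x' y' Xx' Yy'.
by rewrite mulrC; apply: H.
Qed.

Lemma prodm_assoc_l X Y Z z : prodm (prodm X Y) Z z -> prodm X (prodm Y Z) z.
Proof.
apply: prodm_ind; first exact: addc_prodm.
move=> u w pu Zw; apply: (prodm_ind_mul (X:=X) (Y:=Y)) => //;
  first exact: addc_prodm.
by move=> x y Xx Yy; rewrite -mulrA; apply: prodm_mul => //; apply: prodm_mul.
Qed.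

Lemma prodm_assoc_r X Y Z z : prodm X (prodm Y Z) z -> prodm (prodm X Y) Z z.
Proof.
apply: prodm_ind; first exact: addc_prodm.
move=> x v Xx pv; rewrite mulrC; apply: (prodm_ind_mul (X:=Y) (Y:=Z)) => //;
  first exact: addc_prodm.
by move=> y w Yy Zw; rewrite mulrC mulrA; apply: prodm_mul => //; apply: prodm_mul.
Qed.
End Gen.

Section Iso.
Variables (R S1 S2 S3 : comPzRingType) (j1 : R -> S1) (j2 : R -> S2) (j3 : R -> S3).

Lemma modiso_sym X Y : submod j1 X -> submod j2 Y -> modiso j1 j2 X Y -> modiso j2 j1 Y X.
Proof.
move=> [X0 Xadd Xmul] [Y0 Yadd Ymul] [h [hadd hmul hXY hinj hsurj]].
have [g hg] : exists g : S2 -> S1, forall y, Y y -> X (g y) /\ h (g y) = y.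
  apply: (choicef (P := fun y x => Y y -> X x /\ h x = y)) => y.
  case: (classic (Y y)) => Yy; last by exists 0.
  by have [x Xx hx] := hsurj y Yy; exists x.
exists g; split.
- move=> x y Yx Yy; have [gx hgx] := hg x Yx; have [gy hgy] := hg y Yy.
  have [gxy hgxy] := hg _ (Yadd _ _ Yx Yy).
  by apply: hinj => //; [apply: Xadd|rewrite hadd // hgx hgy].
- move=> r y Yy; have [gy hgy] := hg y Yy; have [gry hgry] := hg _ (Ymul r _ Yy).
  by apply: hinj => //; [apply: Xmul|rewrite hmul // hgy hgry].
- by move=> y /hg [].
- by move=> x y Yx Yy e; rewrite -(hg x Yx).2 -(hg y Yy).2 e.
- move=> x Xx; exists (h x); first exact: hXY.
  by apply: hinj => //; [apply: (hg _ (hXY _ Xx)).1|apply: (hg _ (hXY _ Xx)).2].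
Qed.

Lemma modiso_trans X Y Z : modiso j1 j2 X Y -> modiso j2 j3 Y Z -> modiso j1 j3 X Z.
Proof.
move=> [h [hadd hmul hXY hinj hsurj]] [g [gadd gmul gYZ ginj gsurj]].
exists (fun x => g (h x)); split.
- by move=> x y Xx Xy; rewrite hadd // gadd //; apply: hXY.
- by move=> r x Xx; rewrite hmul // gmul //; apply: hXY.
- by move=> x Xx; apply: gYZ; apply: hXY.
- by move=> x y Xx Xy e; apply: hinj => //; apply: ginj => //; apply: hXY.
- move=> z Zz; have [y Yy <-] := gsurj z Zz; have [x Xx <-] := hsurj y Yy.
  by exists x.
Qed.

Lemma modiso_seteq_r X Y Y' : modiso j1 j2 X Y -> seteq Y Y' -> modiso j1 j2 X Y'.
Proof.
move=> [h [hadd hmul hXY hinj hsurj]] e; exists h; split=> //.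
- by move=> x Xx; apply/e; apply: hXY.
- by move=> y /e; apply: hsurj.
Qed.

Lemma modiso_seteq_l X X' Y : modiso j1 j2 X Y -> seteq X X' -> modiso j1 j2 X' Y.
Proof.
move=> [h [hadd hmul hXY hinj hsurj]] e; exists h; split.
- by move=> x y /e Xx /e Xy; apply: hadd.
- by move=> r x /e Xx; apply: hmul.
- by move=> x /e; apply: hXY.
- by move=> x y /e Xx /e Xy; apply: hinj.
- by move=> y /hsurj [x Xx hx]; exists x => //; apply/e.
Qed.
End Iso.

Section Ext.
Variables (R S : comPzRingType) (j : {rmorphism R -> S}).
Implicit Types X Y Z : S -> Prop.

Lemma submod_addc X : submod j X -> addc X.
Proof. by case. Qed.

Lemma submod_prodm_l X Y : submod j X -> submod j (prodm X Y).
Proof.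
move=> [X0 Xadd Xmul]; split; [exact: prodm0|exact: prodm_add|].
move=> r z; apply: (prodm_ind (Z := fun z => prodm X Y (j r * z))).
  split; first by rewrite mulr0; apply: prodm0.
  by move=> a b Ha Hb; rewrite mulrDr; apply: prodm_add.
by move=> x y Xx Yy; rewrite mulrA; apply: prodm_mul => //; apply: Xmul.
Qed.

Lemma submod_prodm_r X Y : submod j Y -> submod j (prodm X Y).
Proof.
move=> sY; have [P0 Padd Pmul] := submod_prodm_l X sY; split.
- exact: prodm0.
- exact: prodm_add.
- by move=> r x /prodm_comm /(Pmul r) /prodm_comm.
Qed.

Lemma submod_ringimg : submod j (ringimg j).
Proof.
split; first by exists 0; rewrite rmorph0.
  by move=> _ _ [a ->] [b ->]; exists (a + b); rewrite rmorphD.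
by move=> r _ [a ->]; exists (r * a); rewrite rmorphM.
Qed.

Lemma xmul_seteq X x : submod j X ->
  seteq (prodm (principal j x) X) (fun z => exists y, X y /\ z = x * y).
Proof.
move=> [X0 Xadd Xmul] z; split.
  apply: (prodm_ind (Z := fun z => exists y, X y /\ z = x * y)).
    split; first by exists 0; rewrite mulr0.
    by move=> _ _ [a [Xa ->]] [b [Xb ->]]; exists (a + b); rewrite mulrDr; split => //; apply: Xadd.
  move=> _ y [r ->] Xy; exists (j r * y); split; first exact: Xmul.
  by rewrite mulrCA mulrA.
move=> [y [Xy ->]]; apply: prodm_mul => //; exists 1; by rewrite rmorph1 mul1r.
Qed.

Lemma one_decomp X X' : seteq (prodm X X') (ringimg j) ->
  exists n (a a' : 'I_n -> S), [/\ forall k, X (a k), forall k, X' (a' k) &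
     \sum_(k < n) a k * a' k = 1].
Proof.
move=> e; have : prodm X X' 1 by apply/e; exists 1; rewrite rmorph1.
by move=> [n [a [a' [Ha Ha' e1]]]]; exists n, a, a'; split.
Qed.

Lemma additive_sum (T : comPzRingType) (h : S -> T) X n (F : 'I_n -> S) :
  addc X -> (forall x y, X x -> X y -> h (x + y) = h x + h y) ->
  (forall k, X (F k)) -> X (\sum_(k < n) F k) /\ h (\sum_(k < n) F k) = \sum_(k < n) h (F k).
Proof.
move=> [X0 Xadd] hadd; elim: n F => [|n IH] F HF.
  rewrite !big_ord0; split=> //.
  by apply: (@addrI _ (h 0)); rewrite -hadd // !addr0.
rewrite !big_ord_recr /=; have [IH1 IH2] := IH (fun k => F (widen_ord (leqnSn n) k)) (fun k => HF _).
by split; [apply: Xadd|rewrite hadd // IH2].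
Qed.

Theorem iso_classeq X Y : invertible j X -> invertible j Y -> modiso j j X Y -> classeq j Y X.
Proof.
move=> [sX [X' [sX' eX]]] [sY [Y' [sY' eY]]] [h [hadd hmul hXY hinj hsurj]].
have [n [a [a' [Ha Ha' e1]]]] := one_decomp eX.
pose y := \sum_(k < n) h (a k) * a' k.
have hz z : X z -> h z = z * y.
  move=> Xz.
  have [r hr] : exists r : 'I_n -> R, forall k, z * a' k = j (r k).
    apply: (choicef (P := fun k r => z * a' k = j r)) => k; have : prodm X X' (z * a' k) by apply: prodm_mul.
    by move/eX => [r ->]; exists r.
  have ez : z = \sum_(k < n) j (r k) * a k.
    by rewrite -{1}[z]mulr1 -e1 mulr_sumr; apply: eq_bigr => k _; rewrite -hr; ring.
  rewrite {1}ez.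
  have [_ ->] := additive_sum (F := fun k => j (r k) * a k) (submod_addc sX) hadd
     (fun k => let: And3 _ _ m := sX in m _ _ (Ha k)).
  rewrite /y mulr_sumr; apply: eq_bigr => k _.
  by rewrite hmul // -hr; ring.
have [m [c [c' [Hc Hc' e2]]]] := one_decomp eY.
have [b hb] : exists b : 'I_m -> S, forall k, X (b k) /\ h (b k) = c k.
  apply: (choicef (P := fun k x => X x /\ h x = c k)) => k; have [x Xx hx] := hsurj _ (Hc k); by exists x.
exists y; split.
  exists (\sum_(k < m) b k * c' k); rewrite -e2 mulr_sumr; apply: eq_bigr => k _.
  by rewrite -(hb k).2 (hz _ (hb k).1); ring.
move=> w; split.
  move=> Yw; have [z Xz hzw] := hsurj w Yw; apply/(xmul_seteq y sX w).
  by exists z; split=> //; rewrite -hzw hz // mulrC.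
by move/(xmul_seteq y sX w) => [z [Xz ->]]; rewrite mulrC -hz //; apply: hXY.
Qed.
End Ext.

Section Ext2.
Variables (R S : comPzRingType) (j : {rmorphism R -> S}).

Lemma addc_ringimg : addc (ringimg j).
Proof. by have [? ? ?] := submod_ringimg j; split. Qed.

Lemma invertible_prodm X Y : invertible j X -> invertible j Y -> invertible j (prodm X Y).
Proof.
move=> [sX [X' [sX' eX]]] [sY [Y' [sY' eY]]]; split; first exact: submod_prodm_l.
exists (prodm X' Y'); split; first exact: submod_prodm_l.
move=> z; split.
  apply: prodm_ind; first exact: addc_ringimg.
  apply: prodm_ind2; first exact: addc_ringimg.
  move=> x y x' y' Xx Yy Xx' Yy'.
  have [r er] : ringimg j (x * x') by apply/eX; apply: prodm_mul.
  have [r' er'] : ringimg j (y * y') by apply/eY; apply: prodm_mul.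
  exists (r * r'); rewrite rmorphM -er -er'; ring.
move=> [r ->].
have [n [a [a' [Ha Ha' e1]]]] := one_decomp eX.
have [m [b [b' [Hb Hb' e2]]]] := one_decomp eY.
have -> : j r = \sum_(k < n) \sum_(l < m) (j r * a k * b l) * (a' k * b' l).
  have e : j r = \sum_(k < n) (j r * (a k * a' k)) * \sum_(l < m) (b l * b' l).
    by rewrite -mulr_suml -mulr_sumr e1 e2 !mulr1.
  rewrite {1}e; apply: eq_bigr => k _; rewrite mulr_sumr; apply: eq_bigr => l _; ring.
apply: prodm_sum => k; apply: prodm_sum => l; apply: prodm_mul; apply: prodm_mul => //.
by have [_ _ hh] := sX; apply: hh.
Qed.
End Ext2.

Section CE.
Variables (R S : comPzRingType) (j : {rmorphism R -> S}).
Implicit Types X Y Z : S -> Prop.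

Lemma classeqE X Y : submod j Y ->
  classeq j X Y <-> exists x, is_unit x /\ forall z, X z <-> exists y, Y y /\ z = x * y.
Proof.
move=> sY; split.
  move=> [x [ux e]]; exists x; split=> // z; rewrite e; exact: xmul_seteq.
move=> [x [ux e]]; exists x; split=> // z; rewrite e; split; by move/(xmul_seteq x sY z).
Qed.

Lemma modiso_mulunit Y x : submod j Y -> is_unit x ->
  modiso j j Y (fun z => exists y, Y y /\ z = x * y).
Proof.
move=> [Y0 Yadd Ymul] [w xw]; exists (fun z => x * z); split.
- by move=> a b _ _; rewrite mulrDr.
- by move=> r a _; rewrite mulrCA.
- by move=> a Ya; exists a.
- by move=> a b _ _ e; rewrite -[a]mul1r -[b]mul1r -xw mulrAC e mulrAC.
- by move=> _ [y [Yy ->]]; exists y.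
Qed.

Lemma classeq_sym X Y : submod j X -> submod j Y -> classeq j X Y -> classeq j Y X.
Proof.
move=> sX sY /(classeqE _ sY) [u [[w uw] e]]; apply/(classeqE _ sX).
exists w; split; first by exists u; rewrite mulrC.
move=> z; split.
  move=> Yz; exists (u * z); split; first by apply/e; exists z.
  by rewrite mulrA [w * u]mulrC uw mul1r.
move=> [x0 [/e [y [Yy ->]] ->]]; by rewrite mulrA [w * u]mulrC uw mul1r.
Qed.

Lemma classeq_trans X Y Z : submod j Y -> submod j Z ->
  classeq j X Y -> classeq j Y Z -> classeq j X Z.
Proof.
move=> sY sZ /(classeqE _ sY) [u [[w uw] e1]] /(classeqE _ sZ) [v [[w' vw] e2]].
apply/(classeqE _ sZ); exists (u * v); split.
  by exists (w * w'); rewrite mulrACA uw vw mulr1.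
move=> z; rewrite e1; split.
  by move=> [y [/e2 [z0 [Zz0 ->]] ->]]; exists z0; rewrite mulrA.
move=> [z0 [Zz0 ->]]; exists (v * z0); split; [apply/e2; exists z0|rewrite mulrA] => //.
Qed.

Lemma classeq_prod I J X Y : submod j X -> submod j Y -> submod j I -> submod j J ->
  classeq j I X -> classeq j J Y -> classeq j (prodm I J) (prodm X Y).
Proof.
move=> sX sY sI sJ /(classeqE _ sX) [u [[w uw] e1]] /(classeqE _ sY) [v [[w' vw] e2]].
apply/(classeqE _ (submod_prodm_l Y sX)); exists (u * v); split.
  by exists (w * w'); rewrite mulrACA uw vw mulr1.
move=> z; split.
  apply: (prodm_ind (Z := fun z => exists p, prodm X Y p /\ z = u * v * p)).
    split; first by exists 0; rewrite mulr0; split=> //; apply: prodm0.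
    move=> _ _ [p1 [h1 ->]] [p2 [h2 ->]]; exists (p1 + p2); rewrite mulrDr.
    by split=> //; apply: prodm_add.
  move=> _ _ /e1 [x [Xx ->]] /e2 [y [Yy ->]]; exists (x * y); split.
    exact: prodm_mul.
  by rewrite mulrACA.
move=> [p [pp ->]]; move: p pp.
apply: (prodm_ind (Z := fun p => prodm I J (u * v * p))).
  split; first by rewrite mulr0; apply: prodm0.
  by move=> p1 p2 h1 h2; rewrite mulrDr; apply: prodm_add.
move=> x y Xx Yy; rewrite mulrACA; apply: prodm_mul.
  by apply/e1; exists x.
by apply/e2; exists y.
Qed.
End CE.

Section Main.
Variables (A B TA TB : comPzRingType)
  (i : {rmorphism A -> B}) (i_inj : injective i)
  (jA : {rmorphism A -> TA}) (hTA : is_total_fractions jA)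
  (jB : {rmorphism B -> TB}) (hTB : is_total_fractions jB)
  (phi : {rmorphism TA -> TB}) (hphi : forall a, phi (jA a) = jB (i a)).

Local Notation ext := (extmod jB phi).

Lemma ext_mono X Y : (forall x, X x -> Y x) -> forall z, ext X z -> ext Y z.
Proof.
move=> h; apply: prodm_mono => // _ [l Xl ->]; exists l => //; exact: h.
Qed.

Lemma ext_gen X b l : X l -> ext X (jB b * phi l).
Proof. by move=> Xl; apply: prodm_mul; [exists b|exists l]. Qed.

Lemma ext_gen1 X l : X l -> ext X (phi l).
Proof. by move=> Xl; rewrite -[phi l]mul1r -(rmorph1 jB); apply: ext_gen. Qed.

Lemma submod_ext X : submod jB (ext X).
Proof. apply: submod_prodm_l; exact: submod_ringimg. Qed.

Lemma ext_prodm X Y : seteq (ext (prodm X Y)) (prodm (ext X) (ext Y)).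
Proof.
move=> z; split.
  apply: prodm_ind; first exact: addc_prodm.
  move=> _ _ [b ->] [l pl ->]; move: l pl b.
  apply: (prodm_ind (Z := fun l => forall b, prodm (ext X) (ext Y) (jB b * phi l))).
    split; first by move=> b; rewrite rmorph0 mulr0; apply: prodm0.
    by move=> l1 l2 h1 h2 b; rewrite rmorphD mulrDr; apply: prodm_add.
  move=> x y Xx Yy b; rewrite rmorphM mulrA.
  by apply: prodm_mul; [apply: ext_gen|apply: ext_gen1].
apply: prodm_ind; first exact: addc_prodm.
apply: prodm_ind2; first exact: addc_prodm.
move=> _ _ _ _ [b ->] [x Xx ->] [b' ->] [y Yy ->].
have -> : jB b * phi x * (jB b' * phi y) = jB (b * b') * phi (x * y).
  by rewrite !rmorphM; ring.
by apply: ext_gen; apply: prodm_mul.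
Qed.

Lemma ext_ringimg : seteq (ext (ringimg jA)) (ringimg jB).
Proof.
move=> z; split.
  apply: prodm_ind; first exact: addc_ringimg.
  by move=> _ _ [b ->] [_ [a ->] ->]; rewrite hphi; exists (b * i a); rewrite rmorphM.
move=> [b ->]; rewrite -[jB b]mulr1 -(rmorph1 phi) -(rmorph1 jA).
by apply: ext_gen; exists 1.
Qed.

Lemma part1 I : invertible jA I -> invertible jB (ext I).
Proof.
move=> [sI [I' [sI' eI]]]; split; first exact: submod_ext.
exists (ext I'); split; first exact: submod_ext.
move=> z; rewrite -ext_ringimg -ext_prodm; split; apply: ext_mono => x; by move/eI.
Qed.

Lemma part2 I J : submod jA J -> classeq jA I J -> classeq jB (ext I) (ext J).
Proof.
move=> sJ [x [[y xy] eI]].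
have eI' w : I w <-> exists v, J v /\ w = x * v by rewrite eI (xmul_seteq x sJ).
exists (phi x); split; first by exists (phi y); rewrite -rmorphM xy rmorph1.
move=> z; rewrite (xmul_seteq (phi x) (submod_ext J)); split.
  apply: (prodm_ind (Z := fun z => exists w, ext J w /\ z = phi x * w)).
    split; first by exists 0; rewrite mulr0; split=> //; apply: prodm0.
    move=> _ _ [w1 [h1 ->]] [w2 [h2 ->]]; exists (w1 + w2); rewrite mulrDr.
    by split=> //; apply: prodm_add.
  move=> _ _ [b ->] [l /eI' [v [Jv ->]] ->]; exists (jB b * phi v).
  by split; [apply: ext_gen|rewrite rmorphM; ring].
move=> [w [Jw ->]]; move: w Jw.
apply: (prodm_ind (Z := fun w => ext I (phi x * w))).
  split; first by rewrite mulr0; apply: prodm0.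
  by move=> w1 w2 h1 h2; rewrite mulrDr; apply: prodm_add.
move=> _ _ [b ->] [v Jv ->].
have -> : phi x * (jB b * phi v) = jB b * phi (x * v) by rewrite rmorphM; ring.
by apply: ext_gen; apply/eI'; exists v.
Qed.
End Main.

Definition pre (R S : comPzRingType) (j : R -> S) (b : S) : R :=
  match excluded_middle_informative (exists r, j r = b) with
  | left h => proj1_sig (constructive_indefinite_description _ h)
  | right _ => 0 end.

Lemma pre_spec (R S : comPzRingType) (j : R -> S) r : j (pre j (j r)) = j r.
Proof.
rewrite /pre; case: excluded_middle_informative => [h|[]]; last by exists r.
by case: (constructive_indefinite_description _ h).
Qed.

Lemma pre_img (R S : comPzRingType) (j : R -> S) b : ringimg j b -> j (pre j b) = b.
Proof. by move=> [r ->]; apply: pre_spec. Qed.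

Lemma pre_eq (R S : comPzRingType) (j : R -> S) r : injective j -> pre j (j r) = r.
Proof. by move=> ij; apply: ij; apply: pre_spec. Qed.

Definition uinv (T : comPzRingType) (t : T) : T :=
  match excluded_middle_informative (exists w, t * w = 1) with
  | left h => proj1_sig (constructive_indefinite_description _ h)
  | right _ => 0 end.

Lemma uinvP (T : comPzRingType) (t : T) : is_unit t -> t * uinv t = 1.
Proof.
rewrite /uinv => h; case: excluded_middle_informative => [h'|//].
by case: (constructive_indefinite_description _ h').
Qed.

Lemma uinv_uniq (T : comPzRingType) (t w : T) : is_unit t -> t * w = 1 -> uinv t = w.
Proof.
move=> ut tw; have e := uinvP ut.
by rewrite -[uinv t]mulr1 -tw mulrA [uinv t * t]mulrC e mul1r.
Qed.

Lemma uinvM (T : comPzRingType) (t t' : T) : is_unit t -> is_unit t' ->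
  uinv (t * t') = uinv t * uinv t'.
Proof.
move=> u u'; apply: uinv_uniq.
  by exists (uinv t * uinv t'); rewrite mulrACA !uinvP // mulr1.
by rewrite mulrACA !uinvP // mulr1.
Qed.

Section Canon.
Variables (A B TA : comPzRingType) (i : {rmorphism A -> B}) (i_inj : injective i)
  (jA : {rmorphism A -> TA}) (jA_inj : injective jA).

Definition canh (c : B) (s : A) (l : B) : TA := jA (pre i (l * c)) * uinv (jA s).
Definition canI (L : B -> Prop) c s : TA -> Prop := fun t => exists2 l, L l & t = canh c s l.

Lemma pre_add (x y : B) : ringimg i x -> ringimg i y -> pre i (x + y) = pre i x + pre i y.
Proof.
move=> [a ->] [b ->]; by rewrite -rmorphD !pre_eq.
Qed.

Lemma pre_mulr (r : A) (x : B) : ringimg i x -> pre i (i r * x) = r * pre i x.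
Proof. by move=> [a ->]; rewrite -rmorphM !pre_eq. Qed.

Lemma pre_mul (x y : B) : ringimg i x -> ringimg i y -> pre i (x * y) = pre i x * pre i y.
Proof. by move=> [a ->] [b ->]; rewrite -rmorphM !pre_eq. Qed.

Lemma canh_add L c s : (forall l, L l -> ringimg i (l * c)) ->
  forall x y, L x -> L y -> canh c s (x + y) = canh c s x + canh c s y.
Proof.
move=> hc x y Lx Ly; rewrite /canh mulrDl (pre_add (hc _ Lx) (hc _ Ly)).
by rewrite rmorphD mulrDl.
Qed.

Lemma canh_mul L c s : (forall l, L l -> ringimg i (l * c)) ->
  forall r x, L x -> canh c s (i r * x) = jA r * canh c s x.
Proof.
by move=> hc r x Lx; rewrite /canh -[i r * x * c]mulrA (pre_mulr r (hc _ Lx)) rmorphM mulrA.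
Qed.

Lemma canon L L' x c s : submod i L -> submod i L' -> seteq (prodm L L') (ringimg i) ->
  L x -> (forall l, L l -> ringimg i (l * c)) -> x * c = i s -> nzd (i s) -> is_unit (jA s) ->
  invertible jA (canI L c s) /\ modiso i jA L (canI L c s).
Proof.
move=> [L0 Ladd Lmul] [L'0 L'add L'mul] eL Lx hc exc ns us.
have hadd := canh_add s hc; have hmul := canh_mul s hc.
have cL : submod jA (canI L c s).
  split.
  - exists 0 => //; apply: (@addrI _ (canh c s 0)); rewrite -hadd // !addr0 //.
  - by move=> _ _ [l1 L1 ->] [l2 L2 ->]; exists (l1 + l2); [apply: Ladd|rewrite hadd].
  - by move=> r _ [l Ll ->]; exists (i r * l); [apply: Lmul|rewrite hmul].
split; last first.
  exists (canh c s); split=> //.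
  - by move=> l Ll; exists l.
  - move=> l1 l2 L1 L2 e.
    have e1 : jA (pre i (l1 * c)) = jA (pre i (l2 * c)).
      by rewrite -[LHS]mulr1 -[RHS]mulr1 -(uinvP us) ![_ * (jA s * _)]mulrCA; congr (_ * _).
    have e2 : l1 * c = l2 * c by rewrite -(pre_img (hc _ L1)) -(pre_img (hc _ L2)) (jA_inj e1).
    apply/eqP; rewrite -subr_eq0; apply/eqP; apply: ns.
    have e3 : (l1 - l2) * c = 0 by rewrite mulrBl e2 subrr.
    by rewrite -exc mulrC mulrCA e3 mulr0.
  - by move=> _ [l Ll ->]; exists l.
have hx m : L' m -> ringimg i (x * m) by move=> L'm; apply/eL; apply: prodm_mul.
split=> //.
exists (fun t => exists2 m, L' m & t = jA (pre i (x * m))); split.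
  split.
  - by exists 0 => //; rewrite mulr0 -(rmorph0 i) pre_eq // rmorph0.
  - move=> _ _ [m1 M1 ->] [m2 M2 ->]; exists (m1 + m2); first exact: L'add.
    by rewrite mulrDr (pre_add (hx _ M1) (hx _ M2)) rmorphD.
  - move=> r _ [m M ->]; exists (i r * m); first exact: L'mul.
    by rewrite mulrCA (pre_mulr r (hx _ M)) rmorphM.
have key l m : L l -> L' m -> canh c s l * jA (pre i (x * m)) = jA (pre i (l * m)).
  move=> Ll L'm; have lm : ringimg i (l * m) by apply/eL; apply: prodm_mul.
  have e : pre i (l * c) * pre i (x * m) = pre i (l * m) * s.
    apply: i_inj; rewrite rmorphM (pre_img (hc _ Ll)) (pre_img (hx _ L'm)) rmorphM (pre_img lm).
    rewrite -exc; ring.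
  rewrite /canh mulrAC -rmorphM e rmorphM -mulrA uinvP // mulr1 //.
move=> z; split.
  apply: prodm_ind; first exact: addc_ringimg.
  by move=> _ _ [l Ll ->] [m L'm ->]; rewrite key //; exists (pre i (l * m)).
move=> [a ->]; have : prodm L L' (i a) by apply/eL; exists a.
move=> [n [l [m [Hl Hm ea]]]].
have -> : jA a = \sum_(k < n) canh c s (l k) * jA (pre i (x * m k)).
  rewrite -(pre_eq a i_inj) ea.
  have hadd' : forall u v, ringimg i u -> ringimg i v ->
      jA (pre i (u + v)) = jA (pre i u) + jA (pre i v).
    by move=> u v hu hv; rewrite pre_add // rmorphD.
  have hF : forall k, ringimg i (l k * m k) by move=> k; apply/eL; apply: prodm_mul.
  have [_ ->] := additive_sum (h := fun b => jA (pre i b))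
     (F := fun k => l k * m k) (addc_ringimg i) hadd' hF.
  by apply: eq_bigr => k _; rewrite key.
apply: prodm_sum => k; apply: prodm_mul; first by exists (l k).
by exists (m k).
Qed.

Lemma ringimg_mul (x y : B) : ringimg i x -> ringimg i y -> ringimg i (x * y).
Proof. by move=> [a ->] [b ->]; exists (a * b); rewrite rmorphM. Qed.

Lemma canh0 c s : canh c s 0 = 0.
Proof. by rewrite /canh mul0r -(rmorph0 i) pre_eq // !rmorph0 mul0r. Qed.

Lemma canI_prodm L M c d s t : submod i L -> submod i M ->
  (forall l, L l -> ringimg i (l * c)) -> (forall m, M m -> ringimg i (m * d)) ->
  is_unit (jA s) -> is_unit (jA t) ->
  (forall w, prodm L M w -> ringimg i (w * (c * d))) /\
  seteq (canI (prodm L M) (c * d) (s * t)) (prodm (canI L c s) (canI M d t)).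
Proof.
move=> sL sM hc hd us ut.
have hcd : forall w, prodm L M w -> ringimg i (w * (c * d)).
  apply: prodm_ind.
    split; first by rewrite mul0r; exists 0; rewrite rmorph0.
    by move=> a b ha hb; rewrite mulrDl; apply: (addc_ringimg i).2.
  move=> l m Ll Mm; rewrite mulrACA; apply: ringimg_mul; [exact: hc|exact: hd].
have hgen l m : L l -> M m -> canh (c * d) (s * t) (l * m) = canh c s l * canh d t m.
  move=> Ll Mm; rewrite /canh mulrACA (pre_mul (hc _ Ll) (hd _ Mm)) rmorphM.
  by rewrite [jA (s * t)]rmorphM uinvM //; ring.
have hadd := canh_add (s * t) hcd.
split=> // z; split.
  move=> [w pw ->]; move: w pw.
  suff H : forall w, prodm L M w -> prodm L M w /\ prodm (canI L c s) (canI M d t) (canh (c * d) (s * t) w).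
    by move=> w /H [].
  apply: prodm_ind.
    split; first by split; [apply: prodm0|rewrite canh0; apply: prodm0].
    move=> a b [pa ha] [pb hb]; split; first exact: prodm_add.
    by rewrite hadd //; apply: prodm_add.
  move=> l m Ll Mm; split; first exact: prodm_mul.
  by rewrite hgen //; apply: prodm_mul; [exists l|exists m].
apply: prodm_ind.
  split; first by exists 0; [apply: prodm0|rewrite canh0].
  move=> _ _ [a pa ->] [b pb ->]; exists (a + b); first exact: prodm_add.
  by rewrite hadd.
move=> _ _ [l Ll ->] [m Mm ->]; exists (l * m); first exact: prodm_mul.
by rewrite hgen.
Qed.
End Canon.

Lemma part4core (A B : comPzRingType) (i : {rmorphism A -> B}) (i_inj : injective i)
  (Ared : reduced A) (Amin : fin_min_primes A) (L : B -> Prop) :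
  invertible i L -> exists x c s, [/\ L x, (forall l, L l -> ringimg i (l * c)),
     x * c = i s & nzd s].
Proof.
move=> [sL [L' [sL' eL]]].
have prodA : forall x y, L x -> L' y -> exists a, x * y = i a.
  move=> x y Lx Ly; have : ringimg i (x * y) by apply/eL; apply: prodm_mul.
  by move=> [a ea]; exists a.
have cover : forall P, minimal_prime P -> exists x y a, [/\ L x, L' y, x * y = i a & ~ P a].
  move=> P [[[P0 Padd Pmul] nP1 _] _]; apply: NNPP => H.
  have [n [a [a' [Ha Ha' e1]]]] := one_decomp eL.
  pose Z := fun b => exists r, b = i r /\ P r.
  have aZ : addc Z.
    split; first by exists 0; rewrite rmorph0.
    by move=> _ _ [r [-> Pr]] [r' [-> Pr']]; exists (r + r'); rewrite rmorphD; split=> //; apply: Padd.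
  have : Z (\sum_(k < n) a k * a' k).
    apply: addc_sum => // k; have [r er] := prodA _ _ (Ha k) (Ha' k).
    exists r; split=> //; apply: NNPP => nPr; apply: H; exists (a k), (a' k), r; split=> //.
  rewrite e1 => -[r [e Pr]]; apply: nP1.
  by have -> : (1 : A) = r by apply: i_inj; rewrite rmorph1.
have [n [f hf]] := Amin.
have [x [y [a [Lx Ly exy ha]]]] := avoid_ind sL sL' prodA cover f n.
exists x, y, a; split=> //.
  by move=> l Ll; apply/eL; apply: prodm_mul.
apply: nzd_avoid => // P mP; have [k kn e] := hf P mP.
have -> : P = f k by apply: functional_extensionality => z; apply: propositional_extensionality.
by apply: ha => //; have <- : P = f k by apply: functional_extensionality => z; apply: propositional_extensionality.
Qed.

Section Main2.
Variables (A B TA TB : comPzRingType)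
  (i : {rmorphism A -> B}) (i_inj : injective i)
  (jA : {rmorphism A -> TA}) (hTA : is_total_fractions jA)
  (jB : {rmorphism B -> TB}) (hTB : is_total_fractions jB)
  (phi : {rmorphism TA -> TB}) (hphi : forall a, phi (jA a) = jB (i a)).

Local Notation ext := (extmod jB phi).

Lemma phi_inj : injective phi.
Proof.
have [jA_inj unA frA] := hTA; have [jB_inj _ _] := hTB.
have h0 x : phi x = 0 -> x = 0.
  move=> px; have [a [s [ns e]]] := frA x.
  have : jB (i a) = jB (i 0).
    by rewrite -hphi -e rmorphM px mul0r !rmorph0.
  move=> /jB_inj /i_inj ea; move: e; rewrite ea rmorph0 => e.
  have [w sw] := unA s ns.
  by rewrite -[x]mulr1 -sw mulrA e mul0r.
by move=> x y e; apply/eqP; rewrite -subr_eq0; apply/eqP; apply: h0; rewrite rmorphB e subrr.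
Qed.

Lemma part7b L I : invertible i L -> invertible jA I -> modiso i jA L I ->
  classeq jB (ext I) (ringimg jB).
Proof.
move=> [sL [L' [sL' eL]]] [sI [I' [sI' eI]]] [h [hadd hmul hLI hinj hsurj]].
have [n [a [a' [Ha Ha' e1]]]] := one_decomp eL.
pose y := \sum_(k < n) phi (h (a k)) * jB (a' k).
have hz l : L l -> phi (h l) = jB l * y.
  move=> Ll.
  have [r hr] : exists r : 'I_n -> A, forall k, l * a' k = i (r k).
    apply: (choicef (P := fun k r => l * a' k = i r)) => k.
    have : prodm L L' (l * a' k) by apply: prodm_mul.
    by move/eL => [r ->]; exists r.
  have el : l = \sum_(k < n) i (r k) * a k.
    by rewrite -{1}[l]mulr1 -e1 mulr_sumr; apply: eq_bigr => k _; rewrite -hr; ring.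
  rewrite {1}el.
  have [_ ->] := additive_sum (F := fun k => i (r k) * a k) (submod_addc sL) hadd
     (fun k => let: And3 _ _ m := sL in m _ _ (Ha k)).
  rewrite rmorph_sum /y mulr_sumr; apply: eq_bigr => k _.
  by rewrite hmul // rmorphM hphi -hr rmorphM; ring.
have [m [c [c' [Hc Hc' e2]]]] := one_decomp eI.
have [b hb] : exists b : 'I_m -> B, forall k, L (b k) /\ h (b k) = c k.
  apply: (choicef (P := fun k x => L x /\ h x = c k)) => k.
  by have [x Lx hx] := hsurj _ (Hc k); exists x.
exists y; split.
  exists (\sum_(k < m) jB (b k) * phi (c' k)).
  rewrite -(rmorph1 phi) -e2 rmorph_sum mulr_sumr; apply: eq_bigr => k _.
  by rewrite rmorphM -(hb k).2 (hz _ (hb k).1); ring.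
move=> z; rewrite (xmul_seteq y (submod_ringimg jB)); split.
  apply: (prodm_ind (Z := fun z => exists w, ringimg jB w /\ z = y * w)).
    split; first by exists 0; rewrite mulr0; split=> //; exists 0; rewrite rmorph0.
    move=> _ _ [w1 [h1 ->]] [w2 [h2 ->]]; exists (w1 + w2); rewrite mulrDr.
    by split=> //; apply: (addc_ringimg jB).2.
  move=> _ _ [b0 ->] [l /hsurj [l0 Ll0 <-] ->]; exists (jB (b0 * l0)).
  by split; [exists (b0 * l0)|rewrite hz // rmorphM; ring].
move=> [_ [[b0 ->] ->]].
have -> : y * jB b0 = \sum_(k < n) jB (b0 * a' k) * phi (h (a k)).
  by rewrite /y mulr_suml; apply: eq_bigr => k _; rewrite rmorphM; ring.
apply: prodm_sum => k; apply: ext_gen; apply: hLI; exact: Ha.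
Qed.

Lemma part7a I : invertible jA I -> classeq jB (ext I) (ringimg jB) ->
  exists2 L, invertible i L & modiso i jA L I.
Proof.
move=> [sI [I' [sI' eI]]] [u [[v uv] eu]].
have [jA_inj _ _] := hTA; have [jB_inj _ _] := hTB.
have eu' z : ext I z <-> exists w, ringimg jB w /\ z = u * w.
  by rewrite eu (xmul_seteq u (submod_ringimg jB)).
have vu : v * u = 1 by rewrite mulrC.
have hI l : I l -> ringimg jB (v * phi l).
  move=> Il; have [_ [[b ->] e]] := (eu' (phi l)).1 (ext_gen1 jB phi Il).
  by exists b; rewrite e mulrA vu mul1r.
have hI' l : I' l -> ringimg jB (u * phi l).
  move=> Il.
  have : prodm (ext I) (ext I') (u * phi l).
    apply: prodm_mul; last exact: (ext_gen1 jB phi Il).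
    by apply/eu'; exists 1; rewrite mulr1; split=> //; exists 1; rewrite rmorph1.
  move/(ext_prodm jB phi) => /(ext_mono (Y := ringimg jA)) h.
  apply/(ext_ringimg hphi); apply: h => x; by move/eI.
pose g l := pre jB (v * phi l).
pose g' l := pre jB (u * phi l).
have gE l : I l -> jB (g l) = v * phi l by move=> Il; apply: pre_img; apply: hI.
have gE' l : I' l -> jB (g' l) = u * phi l by move=> Il; apply: pre_img; apply: hI'.
have [I0 Iadd Imul] := sI; have [I'0 I'add I'mul] := sI'.
pose L := fun b => exists2 l, I l & b = g l.
pose L' := fun b => exists2 l, I' l & b = g' l.
have gadd x y : I x -> I y -> g (x + y) = g x + g y.
  by move=> Ix Iy; apply: jB_inj; rewrite rmorphD !gE // ?rmorphD ?mulrDr //; apply: Iadd.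
have gmul r x : I x -> g (jA r * x) = i r * g x.
  by move=> Ix; apply: jB_inj; rewrite rmorphM !gE // ?rmorphM ?hphi; [ring|apply: Imul].
have sL : submod i L.
  split.
  - exists 0 => //; apply: jB_inj; rewrite gE // !rmorph0 mulr0 //.
  - by move=> _ _ [x Ix ->] [y Iy ->]; exists (x + y); [apply: Iadd|rewrite gadd].
  - by move=> r _ [x Ix ->]; exists (jA r * x); [apply: Imul|rewrite gmul].
have sL' : submod i L'.
  split.
  - exists 0 => //; apply: jB_inj; rewrite gE' // !rmorph0 mulr0 //.
  - move=> _ _ [x Ix ->] [y Iy ->]; exists (x + y); first by apply: I'add.
    by apply: jB_inj; rewrite rmorphD !gE' // ?rmorphD ?mulrDr //; apply: I'add.
  - move=> r _ [x Ix ->]; exists (jA r * x); first by apply: I'mul.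
    by apply: jB_inj; rewrite rmorphM !gE' // ?rmorphM ?hphi; [ring|apply: I'mul].
have prodE x y : I x -> I' y -> jB (g x * g' y) = phi (x * y).
  by move=> Ix Iy; rewrite rmorphM gE // gE' // rmorphM mulrACA vu mul1r.
exists L.
  split=> //; exists L'; split=> // z; split.
    apply: prodm_ind; first exact: addc_ringimg.
    move=> _ _ [x Ix ->] [y Iy ->].
    have [a ea] : ringimg jA (x * y) by apply/eI; apply: prodm_mul.
    exists a; apply: jB_inj; rewrite prodE // ea hphi //.
  move=> [a ->]; have : prodm I I' (jA a) by apply/eI; exists a.
  move=> [n [x [y [Hx Hy ea]]]].
  have -> : i a = \sum_(k < n) g (x k) * g' (y k).
    apply: jB_inj; rewrite -hphi ea !rmorph_sum; apply: eq_bigr => k _.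
    by rewrite prodE.
  by apply: prodm_sum => k; apply: prodm_mul; [exists (x k)|exists (y k)].
apply: modiso_sym => //.
exists g; split=> //.
- by move=> l Il; exists l.
- move=> x y Ix Iy e; apply: phi_inj.
  by rewrite -[phi x]mul1r -[phi y]mul1r -uv -!mulrA -!gE // e.
- by move=> _ [l Il ->]; exists l.
Qed.
End Main2.

Unset Implicit Arguments.
Theorem theorem5p3
  (A B TA TB : comPzRingType)
  (i : {rmorphism A -> B}) (i_inj : injective i)
  (jA : {rmorphism A -> TA}) (hTA : is_total_fractions jA)
  (jB : {rmorphism B -> TB}) (hTB : is_total_fractions jB)
  (phi : {rmorphism TA -> TB}) (hphi : forall a, phi (jA a) = jB (i a))
  (Ared : reduced A) (Amin : fin_min_primes A)
  (hnzd : forall a : A, nzd a -> nzd (i a)) :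
  (forall I, invertible jA I -> invertible jB (extmod jB phi I)) /\
  (      forall I J, invertible jA I -> invertible jA J -> classeq jA I J ->
        classeq jB (extmod jB phi I) (extmod jB phi J)) /\
  (      forall I J, invertible jA I -> invertible jA J ->
        seteq (extmod jB phi (prodm I J))
              (prodm (extmod jB phi I) (extmod jB phi J))) /\
  (
      forall L, invertible i L -> exists2 I, invertible jA I & modiso i jA L I) /\
  (
      forall L M I J, invertible i L -> invertible i M ->
        invertible jA I -> invertible jA J ->
        modiso i jA L I -> modiso i jA M J ->
        (classeq i L M <-> classeq jA I J)) /\
  (
      forall L M I J K, invertible i L -> invertible i M ->
        invertible jA I -> invertible jA J -> invertible jA K ->
        modiso i jA L I -> modiso i jA M J -> modiso i jA (prodm L M) K ->
        classeq jA K (prodm I J)) /\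
  (
      forall I, invertible jA I ->
        (classeq jB (extmod jB phi I) (ringimg jB) <->
         exists2 L, invertible i L & modiso i jA L I)).
Proof.
have [jA_inj unA _] := hTA.
have canonL L : invertible i L -> exists x c s, [/\ L x, (forall l, L l -> ringimg i (l * c)),
     x * c = i s, nzd s & invertible jA (canI i jA L c s) /\ modiso i jA L (canI i jA L c s)].
  move=> iL; have [x [c [s [Lx hc exc ns]]]] := part4core i_inj Ared Amin iL.
  exists x, c, s; split=> //.
  have [sL [L' [sL' eL]]] := iL.
  exact: (canon i_inj jA_inj sL sL' eL Lx hc exc (hnzd _ ns) (unA _ ns)).
split; first by move=> I; apply: part1.
split; first by move=> I J _ [sJ _]; apply: part2.
split; first by move=> I J _ _; apply: ext_prodm.
split.
  move=> L iL; have [x [c [s [_ _ _ _ [h1 h2]]]]] := canonL L iL.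
  by exists (canI i jA L c s).
split.
  move=> L M I J iL iM iI iJ hLI hMJ.
  have sL := iL.1; have sM := iM.1; have sI := iI.1; have sJ := iJ.1.
  split.
    move=> /(classeqE _ sM) [x [ux e]].
    have hML : modiso i i M L.
      apply: (modiso_seteq_r (modiso_mulunit sM ux)) => z; by rewrite e.
    have hMI := modiso_trans hML hLI.
    have hJM := modiso_sym sM sJ hMJ.
    exact: (iso_classeq iJ iI (modiso_trans hJM hMI)).
  move=> /(classeqE _ sJ) [x [ux e]].
  have hJI : modiso jA jA J I.
    apply: (modiso_seteq_r (modiso_mulunit sJ ux)) => z; by rewrite e.
  have hIL := modiso_sym sL sI hLI.
  have hML := modiso_trans hMJ (modiso_trans hJI hIL).
  exact: (iso_classeq iM iL hML).
split.
  move=> L M I J K iL iM iI iJ iK hLI hMJ hK.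
  have [x [c [s [Lx hc exc ns [iCL hCL]]]]] := canonL L iL.
  have [y [d [t [My hd eyd nt [iCM hCM]]]]] := canonL M iM.
  have sL := iL.1; have sM := iM.1; have sI := iI.1; have sJ := iJ.1; have sK := iK.1.
  have sCL := iCL.1; have sCM := iCM.1.
  have [hcd ecan] := canI_prodm i_inj (jA := jA) sL sM hc hd (unA _ ns) (unA _ nt).
  have iLM := invertible_prodm iL iM.
  have nst : nzd (s * t).
    by move=> z; rewrite -mulrA => /ns /nt.
  have [_ hLMC] : invertible jA (canI i jA (prodm L M) (c * d) (s * t)) /\
      modiso i jA (prodm L M) (canI i jA (prodm L M) (c * d) (s * t)).
    have [sLM [LM' [sLM' eLM]]] := iLM.
    apply: (canon i_inj jA_inj sLM sLM' eLM (x := x * y) _ hcd _ (hnzd _ nst) (unA _ nst)).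
      exact: (prodm_mul Lx My).
    by rewrite mulrACA exc eyd rmorphM.
  have hLMP := modiso_seteq_r hLMC ecan.
  have iP := invertible_prodm iCL iCM.
  have sP := iP.1.
  have sLM := iLM.1.
  have cKP : classeq jA K (prodm (canI i jA L c s) (canI i jA M d t)).
    exact: (iso_classeq iP iK (modiso_trans (modiso_sym sLM sP hLMP) hK)).
  have cI : classeq jA I (canI i jA L c s).
    exact: (iso_classeq iCL iI (modiso_trans (modiso_sym sL sCL hCL) hLI)).
  have cJ : classeq jA J (canI i jA M d t).
    exact: (iso_classeq iCM iJ (modiso_trans (modiso_sym sM sCM hCM) hMJ)).
  have cIJ := classeq_prod sCL sCM sI sJ cI cJ.
  have sIJ := (invertible_prodm iI iJ).1.
  exact: (classeq_trans sP sIJ cKP (classeq_sym sIJ sP cIJ)).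
move=> I iI; split; first exact: part7a.
by move=> [L iL hLI]; apply: (part7b hphi iL iI hLI).
Qed.
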